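(* Consider a distributed storage system $\mathcal{D}(n,k,d)$ with node storage capacity $\alpha$ and repair bandwidth $\gamma=d\beta$, in the presence of an omniscient active adversary controlling any $b\ge 1$ nodes. If $2b<k$, its resiliency capacity satisfies \[ C_r(\alpha,\gamma)\le\sum_{i=2b+1}^{k}\min\{(d-i+1)\beta,\ \alpha\}. \] If $2b\ge k$, then $C_r(\alpha,\gamma)=0$.
   Context: A distributed storage system (DSS) $\mathcal{D}(n,k,d)$, $k\le d\le n-1$: a source stores a file (a message $m$ from a finite set, all messages equally likely) on $n$ storage nodes, each storing at most $\alpha$ symbols. Nodes fail one at a time; each failed node is replaced by a new node that connects to some $d$ of the remaining $n-1$ active nodes and downloads $\beta=\gamma/d$ symbols from each (symmetric repair), then stores at most $\alpha$ symbols. A data collector connects to any $k$ simultaneously active nodes, downloads their stored contents, and must recover the file. An omniscient adversary knows the file, the storage/repair/decoding schemes and all stored data, and may control any $b$ nodes among all nodes ever in the system (initial nodes and/or replacement nodes, possibly at different times): for a controlled node it may arbitrarily alter the stored data and the messages that node sends to replacement nodes during repair and to data collectors. The resiliency capacity $C_r(\alpha,\gamma)$ is the maximum amount of data (file size, in symbols) that can be stored so that every data collector connecting to any $k$ active nodes, for any failure/repair sequence, recovers the file correctly whatever the adversary's choice of controlled nodes and actions. *)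

(* Defs.v *)
From mathcomp Require Import all_boot.
Set Implicit Arguments. Unset Strict Implicit. Unset Printing Implicit Defensive.

(* A repair event: (position of the failed node, set of d helper positions). *)
Definition event (n : nat) := ('I_n * {set 'I_n})%type.

Definition valid_event (n d : nat) (e : event n) : bool :=
  (e.1 \notin e.2) && (#|e.2| == d).

(* All functions may depend on the (public)
   failure/repair history.
   - enc m i        : initial content of node i;
   - send h e j c   : packet sent by helper at position j (storing c) for the
                      repair event e, the past history being h;
   - store h e ps   : content stored by the new node, from the packets ps of the
                      helpers (listed in the order of enum of the helper set);
   - decode h K cs  : the data collector's output, after history h, connecting
                      to the node set K and receiving the contents cs
                      (listed in the order of enum K). *)
Record scheme (n alpha beta : nat) (Sym M : finType) := Scheme {
  enc    : M -> 'I_n -> alpha.-tuple Sym;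
  send   : seq (event n) -> event n -> 'I_n -> alpha.-tuple Sym -> beta.-tuple Sym;
  store  : seq (event n) -> event n -> seq (beta.-tuple Sym) -> alpha.-tuple Sym;
  decode : seq (event n) -> {set 'I_n} -> seq (alpha.-tuple Sym) -> M }.

(* Nodes ever in the system are identified by (creation time, position):
   (0, i) is the initial node i; (s.+1, f) is the replacement node created at
   repair step s (0-based) at position f. *)
Definition nodeid (n : nat) := (nat * 'I_n)%type.

(* System state: for each position, the id-stamp and (honestly computed)
   content of the node currently active there. *)
Definition state (n alpha : nat) (Sym : finType) := 'I_n -> nat * alpha.-tuple Sym.

Section Run.
Variables (n alpha beta : nat) (Sym M : finType) (sch : scheme n alpha beta Sym M).
(* S : controlled nodes; advp s j : packet sent at repair step s by the
   controlled node at position j (arbitrary). *)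
Variables (S : seq (nodeid n)) (advp : nat -> 'I_n -> beta.-tuple Sym).

Definition step (past : seq (event n)) (e : event n) (st : state n alpha Sym)
  : state n alpha Sym :=
  let pkt j := if ((st j).1, j) \in S then advp (size past) j
               else send sch past e j (st j).2 in
  let c := store sch past e [seq pkt j | j <- enum e.2] in
  fun i => if i == e.1 then ((size past).+1, c) else st i.

Fixpoint run_from (past fut : seq (event n)) (st : state n alpha Sym)
  : state n alpha Sym :=
  match fut with
  | [::] => st
  | e :: fut' => run_from (rcons past e) fut' (step past e st)
  end.

Definition run (m : M) (hist : seq (event n)) : state n alpha Sym :=
  run_from [::] hist (fun i => (0, enc sch m i)).
End Run.

(* Resiliency: for every message, every valid failure/repair sequence, every
   data collector (any k active nodes), every choice of at most b controlled
   nodes (among all nodes ever in the system) and every behaviour of those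
   nodes (arbitrary repair packets and arbitrary data sent to the data
   collector), the data collector decodes the message correctly. *)
Definition resilient (n k d b alpha beta : nat) (Sym M : finType)
  (sch : scheme n alpha beta Sym M) : Prop :=
  forall (m : M) (hist : seq (event n)), all (valid_event d) hist ->
  forall K : {set 'I_n}, #|K| = k ->
  forall S : seq (nodeid n), size S <= b ->
  forall (advp : nat -> 'I_n -> beta.-tuple Sym) (advd : 'I_n -> alpha.-tuple Sym),
  let st := run sch S advp m hist in
  decode sch hist K
    [seq (if ((st j).1, j) \in S then advd j else (st j).2) | j <- enum K] = m.

(* Main.v *)
Require Import Defs.
From mathcomp Require Import all_boot.
Set Implicit Arguments. Unset Strict Implicit. Unset Printing Implicit Defensive.

Definition advh (n alpha beta : nat) (Sym M : finType) (sch : scheme n alpha beta Sym M)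
  (hist : seq (event n)) (m : M) (s : nat) (j : 'I_n) : beta.-tuple Sym :=
  if drop s hist is e :: _ then send sch (take s hist) e j (enc sch m j)
  else send sch [::] (j, set0) j (enc sch m j).

Definition INV (n alpha : nat) (Sym M : finType) (enc' : M -> 'I_n -> alpha.-tuple Sym)
  (m1 m2 : M) (P : {set 'I_n}) (past : seq (event n)) (stA stB : state n alpha Sym) :=
  forall j, (j \in P -> stA j = (0, enc' m1 j) /\ stB j = (0, enc' m2 j)) /\
   (j \notin P -> if j \in map fst past then stA j = stB j
                  else stA j = (0, enc' m1 j) /\ stB j = (0, enc' m2 j)).

Lemma inS (n : nat) (P : {set 'I_n}) (x : nat) (j : 'I_n) :
  ((x, j) \in [seq (0, i) | i <- enum P]) = (x == 0) && (j \in P).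
Proof.
apply/mapP/andP => [[i]|[/eqP-> jP]]; last by exists j; rewrite ?mem_enum.
by rewrite mem_enum => iP [-> ->].
Qed.

Lemma inv_run (n alpha beta : nat) (Sym M : finType) (sch : scheme n alpha beta Sym M)
  (m1 m2 : M) (hist : seq (event n)) (P1 P2 : {set 'I_n}) :
  [disjoint P1 & P2] ->
  (forall e, e \in hist -> e.1 \notin P1 :|: P2) ->
  (forall past e fut, past ++ e :: fut = hist -> forall j, j \in e.2 -> j \notin P1 :|: P2 ->
     j \notin map fst past -> send sch past e j (enc sch m1 j) = send sch past e j (enc sch m2 j)) ->
  forall fut past stA stB, past ++ fut = hist ->
  INV (enc sch) m1 m2 (P1 :|: P2) past stA stB ->
  INV (enc sch) m1 m2 (P1 :|: P2) (past ++ fut)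
    (run_from sch [seq (0, i) | i <- enum P1] (advh sch hist m2) past fut stA)
    (run_from sch [seq (0, i) | i <- enum P2] (advh sch hist m1) past fut stB).
Proof.
move=> dP repl fresh; elim=> [|e fut IH] past stA stB Eh Hinv /=; first by rewrite cats0.
rewrite -cat_rcons; apply: IH; first by rewrite cat_rcons.
have eh : e \in hist by rewrite -Eh mem_cat inE eqxx orbT.
have e1P := repl e eh.
have Hs : drop (size past) hist = e :: fut by rewrite -Eh drop_size_cat.
have Ht : take (size past) hist = past by rewrite -Eh take_size_cat.
have Hpk : forall j, j \in e.2 ->
   (if ((stA j).1, j) \in [seq (0, i) | i <- enum P1] then advh sch hist m2 (size past) j
    else send sch past e j (stA j).2) =
   (if ((stB j).1, j) \in [seq (0, i) | i <- enum P2] then advh sch hist m1 (size past) j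
    else send sch past e j (stB j).2).
  move=> j je; rewrite !inS /advh Hs Ht.
  have [jP|jP] := boolP (j \in P1 :|: P2).
    have [-> ->] := (Hinv j).1 jP; rewrite /=.
    move: jP; rewrite inE => /orP[] jP.
      by rewrite jP (disjointFr dP jP).
    by rewrite jP (disjointFl dP jP).
  have jP1 : (j \in P1) = false by apply/negbTE; move: jP; rewrite inE negb_or => /andP[].
  have jP2 : (j \in P2) = false by apply/negbTE; move: jP; rewrite inE negb_or => /andP[].
  rewrite jP1 jP2 !andbF.
  move: ((Hinv j).2 jP); case: ifP => jpast; first by move=> ->.
  by move=> [-> ->] /=; apply: (fresh past e fut Eh) => //; rewrite jpast.
rewrite /step.
set cA := store _ _ _ _; set cB := store _ _ _ _.
have EcAB : cA = cB.
  rewrite /cA /cB; congr store; apply/eq_in_map => j; rewrite mem_enum; apply: Hpk.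
move=> i; have [-> /=|ne] := eqVneq i e.1.
  rewrite (negbTE e1P) EcAB /=; split=> // _.
  by rewrite map_rcons mem_rcons inE eqxx.
rewrite map_rcons mem_rcons inE (negbTE ne) /=.
exact: Hinv.
Qed.

Lemma collide (n k d b alpha beta : nat) (Sym M : finType) (sch : scheme n alpha beta Sym M)
  (m1 m2 : M) (hist : seq (event n)) (K P1 P2 : {set 'I_n}) :
  resilient k d b sch ->
  all (valid_event d) hist -> #|K| = k -> #|P1| <= b -> #|P2| <= b ->
  [disjoint P1 & P2] ->
  (forall e, e \in hist -> e.1 \notin P1 :|: P2) ->
  (forall past e fut, past ++ e :: fut = hist -> forall j, j \in e.2 -> j \notin P1 :|: P2 ->
     j \notin map fst past -> send sch past e j (enc sch m1 j) = send sch past e j (enc sch m2 j)) ->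
  (forall j, j \in K -> j \notin P1 :|: P2 -> j \notin map fst hist -> enc sch m1 j = enc sch m2 j) ->
  m1 = m2.
Proof.
move=> Hres Hv HK HP1 HP2 dP repl fresh HKe.
have H := @inv_run n alpha beta Sym M sch m1 m2 hist P1 P2 dP repl fresh hist [::]
  (fun i => (0, enc sch m1 i)) (fun i => (0, enc sch m2 i)) erefl.
have /H {}H : INV (enc sch) m1 m2 (P1 :|: P2) [::] (fun i => (0, enc sch m1 i)) (fun i => (0, enc sch m2 i)).
  by move=> j; split.
have sz1 : size [seq (0, i) | i <- enum P1] <= b by rewrite size_map -cardE.
have sz2 : size [seq (0, i) | i <- enum P2] <= b by rewrite size_map -cardE.
have E1 := Hres m1 hist Hv K HK _ sz1 (advh sch hist m2) (fun j => enc sch m2 j).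
have E2 := Hres m2 hist Hv K HK _ sz2 (advh sch hist m1) (fun j => enc sch m1 j).
rewrite /= in E1 E2.
apply: etrans (esym E1) _; apply: etrans _ E2; congr decode; apply/eq_in_map => j; rewrite mem_enum => jK.
rewrite /run /= in H *.
rewrite !inS.
have [jP|jP] := boolP (j \in P1 :|: P2).
  have [-> ->] := (H j).1 jP; rewrite /=.
  move: jP; rewrite inE => /orP[] jP.
    by rewrite jP (disjointFr dP jP).
  by rewrite jP (disjointFl dP jP).
have jP1 : (j \in P1) = false by apply/negbTE; move: jP; rewrite inE negb_or => /andP[].
have jP2 : (j \in P2) = false by apply/negbTE; move: jP; rewrite inE negb_or => /andP[].
rewrite jP1 jP2 !andbF.
move: ((H j).2 jP); case: ifP => jh; first by move=> ->.
by move=> [-> ->] /=; rewrite (HKe j jK jP) ?jh.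
Qed.
Lemma card_lt (n c : nat) : #|[set j : 'I_n | j < c]| = minn c n.
Proof.
have le : minn c n <= n by apply: geq_minr.
have -> : [set j : 'I_n | j < c] = [set widen_ord le i | i : 'I_(minn c n)].
  apply/setP => j; rewrite !inE; apply/idP/imsetP => [jc|[i _ ->]].
    have jm : j < minn c n by rewrite leq_min jc ltn_ord.
    by exists (Ordinal jm) => //; apply: val_inj.
  by rewrite /= (leq_trans (ltn_ord i)) // geq_minl.
rewrite card_imset ?card_ord // => x y /(congr1 val) /= /val_inj. done.
Qed.

Lemma notP (n b : nat) (j : 'I_n) :
  (j \notin [set j : 'I_n | j < b] :|: ([set j : 'I_n | j < 2 * b] :\: [set j : 'I_n | j < b]))
  = (2 * b <= j).
Proof.
rewrite !inE; case: (ltnP j b) => jb /=; last by rewrite -leqNgt.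
by rewrite leqNgt (leq_trans jb (leq_pmull b (isT : 0 < 2))).
Qed.

Lemma cardP2 (n b : nat) :
  #|[set j : 'I_n | j < 2 * b] :\: [set j : 'I_n | j < b]| <= b.
Proof.
rewrite cardsDS ?card_lt; last by apply/subsetP => j; rewrite !inE => jb; rewrite (leq_trans jb (leq_pmull b (isT : 0 < 2))).
rewrite leq_subLR; case: (leqP b n) => bn.
  by rewrite addnn -mul2n geq_minl.
by rewrite (leq_trans (geq_minr _ _)) // leq_addr.
Qed.

Lemma disjP (n b : nat) :
  [disjoint [set j : 'I_n | j < b] & [set j : 'I_n | j < 2 * b] :\: [set j : 'I_n | j < b]].
Proof. by rewrite -setI_eq0 setDE setICA setICr setI0. Qed.

Lemma map_split (T U : Type) (f : T -> U) (past : seq U) (e : U) (fut : seq U) (s : seq T) :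
  map f s = past ++ e :: fut -> exists s1 x s2, [/\ s = s1 ++ x :: s2, past = map f s1 & e = f x].
Proof.
elim: past s => [|p past IH] [|y s] //=.
  by move=> [<- _]; exists [::], y, s.
move=> [<- /IH [s1 [x [s2 [-> -> ->]]]]].
by exists (y :: s1), x, s2.
Qed.

Lemma part1 (n k d b alpha beta : nat) (Sym M : finType) (sch : scheme n.+1 alpha beta Sym M) :
  k <= d -> d <= n -> 2 * b < k -> resilient k d b sch ->
  #|M| <= #|Sym| ^ (\sum_(2 * b <= i < k) minn ((d - i) * beta) alpha).
Proof.
move=> kd dn bk Hres.
pose ev (i : nat) : event n.+1 := (inord i, [set j : 'I_n.+1 | j < d.+1] :\ inord i).
pose I := iota (2 * b) (k - 2 * b).
pose R := [seq i <- I | (d - i) * beta < alpha].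
pose hist := map ev R.
pose FJ (i : nat) : seq 'I_n.+1 := [seq inord j | j <- iota i.+1 (d - i)].
pose pastOf (i : nat) := map ev [seq r <- R | r < i].
pose piece (m : M) (i : nat) : seq Sym :=
  if (d - i) * beta < alpha
  then flatten [seq val (send sch (pastOf i) (ev i) j (enc sch m j)) | j <- FJ i]
  else val (enc sch m (inord i)).
pose W (m : M) := flatten [seq piece m i | i <- I].
pose L := \sum_(2 * b <= i < k) minn ((d - i) * beta) alpha.
have shapeW : forall m, shape [seq piece m i | i <- I] = [seq minn ((d - i) * beta) alpha | i <- I].
  move=> m; rewrite /shape -map_comp; apply: eq_map => i /=; rewrite /piece /minn.
  case: ifP => _; last by rewrite size_tuple.
  rewrite size_flatten /shape -map_comp /FJ -map_comp.
  under eq_map => j do rewrite /= size_tuple.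
  have mc : forall (T : Type) (s : seq T) (c : nat), map (fun _ => c) s = nseq (size s) c.
    by move=> T; elim=> //= x s IH c; rewrite IH.
  rewrite mc size_iota.
  by rewrite sumn_nseq mulnC.
have sizeW : forall m, size (W m) == L.
  by move=> m; rewrite size_flatten shapeW /L sumnE big_map.
pose f (m : M) : L.-tuple Sym := Tuple (sizeW m).
have finj : injective f.
  move=> m1 m2 /(congr1 val) /= EW.
  have EP : [seq piece m1 i | i <- I] = [seq piece m2 i | i <- I].
    by rewrite -(flattenK [seq piece m1 i | i <- I]) -(flattenK [seq piece m2 i | i <- I]) !shapeW; congr reshape.
  have Epc : forall i, i \in I -> piece m1 i = piece m2 i by apply/eq_in_map.
  have ordK : forall i, i < k -> (inord i : 'I_n.+1) = i :> nat.
    by move=> i ik; rewrite inordK // ltnS (leq_trans (ltnW ik)) // (leq_trans kd).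
  have RI : forall i, i \in R -> 2 * b <= i < k /\ (d - i) * beta < alpha.
    move=> i; rewrite mem_filter mem_iota => /andP[c /andP[-> /=]].
    by rewrite subnKC ?(ltnW bk).
  have inI : forall i, 2 * b <= i < k -> i \in I.
    by move=> i /andP[h1 h2]; rewrite mem_iota h1 subnKC ?(ltnW bk).
  have encE : forall j : 'I_n.+1, 2 * b <= j -> j < k -> (val j \notin R) -> enc sch m1 j = enc sch m2 j.
    move=> j h1 h2 jR; have := Epc j (inI j (introT andP (conj h1 h2))).
    have c : ((d - j) * beta < alpha) = false.
      by apply/negbTE; apply: contra jR => c; rewrite mem_filter c inI ?h1.
    by rewrite /piece c inord_val => /val_inj.
  have inF : forall (S : seq nat) (j : 'I_n.+1), val j \in S -> j \in map fst (map ev S).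
    move=> S j jS; apply/mapP; exists (ev j); first by apply/mapP; exists (val j).
    by rewrite /= inord_val.
  have sR : sorted ltn R by apply: sorted_filter; [apply: ltn_trans | apply: iota_ltn_sorted].
  apply: (collide Hres (hist := hist) (K := [set j : 'I_n.+1 | j < k])
     (P1 := [set j : 'I_n.+1 | j < b])
     (P2 := [set j : 'I_n.+1 | j < 2 * b] :\: [set j : 'I_n.+1 | j < b])).
  - rewrite all_map; apply/allP => i /RI [/andP [i2b ik] _].
    rewrite /valid_event /= !inE eqxx /=.
    have := cardsD1 (inord i : 'I_n.+1) [set j : 'I_n.+1 | j < d.+1].
    rewrite card_lt inE ordK // ltnS (leq_trans (ltnW ik) kd) /=.
    have -> : minn d.+1 n.+1 = d.+1 by apply/minn_idPl.
    by move=> /eqP; rewrite add1n eqSS eq_sym.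
  - by rewrite card_lt; apply/minn_idPl; apply: leq_trans kd _; apply: leq_trans dn _.
  - by rewrite card_lt geq_minl.
  - exact: cardP2.
  - exact: disjP.
  - move=> e /mapP [i /RI [/andP [i2b ik] _] ->].
    by rewrite notP /= ordK.
  - move=> past e fut Eh; have [R1 [i [R2 [ER -> ->]]]] := map_split (esym Eh); move=> j je.
    rewrite notP => j2b jpast.
    have iR : i \in R by rewrite ER mem_cat inE eqxx orbT.
    have [/andP [i2b ik] ci] := RI i iR.
    have Hlt : forall x, x \in R1 -> x < i.
      move=> x xR; have : sorted ltn [:: x; i].
        apply: (subseq_sorted ltn_trans _ sR); rewrite ER -cat1s.
        by apply: cat_subseq; rewrite sub1seq ?xR // inE eqxx.
      by rewrite /= andbT.
    have Hgt : forall y, y \in R2 -> i < y.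
      move=> y yR; have : sorted ltn [:: i; y].
        apply: (subseq_sorted ltn_trans _ sR); rewrite ER -(cat0s [:: i; y]).
        apply: cat_subseq; first exact: sub0seq.
        by rewrite -cat1s -(cat1s i R2); apply: cat_subseq; rewrite ?sub1seq ?inE ?eqxx.
      by rewrite /= andbT.
    have EpO : pastOf i = map ev R1.
      rewrite /pastOf ER filter_cat /= ltnn.
      have -> : [seq r <- R2 | r < i] = [::].
        rewrite -(filter_pred0 R2); apply: eq_in_filter => y /Hgt yi /=.
        by rewrite ltnNge (ltnW yi).
      rewrite cats0; congr map; apply/all_filterP; apply/allP => x; exact: Hlt.
    move: je; rewrite !inE => /andP [jne jd].
    have jnei : val j != i by apply: contra jne => /eqP <-; rewrite inord_val.
    case: (ltngtP i j) => [ij|ji|]; last by move=> E; rewrite E eqxx in jnei.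
    + have := Epc i (inI i (introT andP (conj i2b ik))).
      rewrite /piece ci EpO => /(congr1 (reshape (nseq (size (FJ i)) beta))).
      have sh : forall m, shape [seq val (send sch (map ev R1) (ev i) j0 (enc sch m j0)) | j0 <- FJ i] = nseq (size (FJ i)) beta.
        move=> m; rewrite /shape -map_comp.
        by elim: (FJ i) => //= x s ->; rewrite size_tuple.
      rewrite -{1}(sh m1) -(sh m2) !flattenK => Em.
      have jF : j \in FJ i.
        apply/mapP; exists (val j); last by rewrite inord_val.
        by rewrite mem_iota ij /= addSn subnKC // (leq_trans (ltnW ik) kd).
      have := (iffRL (eq_in_map _ _ _) Em) j jF.
      by move=> /= /val_inj.
    + have jk : j < k by rewrite (ltn_trans ji).
      rewrite (encE j j2b jk) //.
      apply: contra jpast => jR; apply: inF.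
      move: jR; rewrite ER mem_cat inE => /orP [] // /orP [/eqP E|/Hgt]; first by rewrite E ltnn in ji.
      by move=> h; have := ltn_trans ji h; rewrite ltnn.
  - move=> j; rewrite inE notP => jk j2b jh.
    apply: encE => //; apply: contra jh; exact: inF.
by rewrite -(card_tuple L Sym); apply: leq_card finj.
Qed.

Theorem theorem3 (n k d b alpha beta : nat) (Sym : finType) :
  1 < #|Sym| -> 1 <= b -> k <= d -> d <= n - 1 ->
  (2 * b < k ->
     forall (M : finType) (sch : scheme n alpha beta Sym M),
       resilient k d b sch ->
       #|M| <= #|Sym| ^ (\sum_((2 * b).+1 <= i < k.+1) minn ((d - i + 1) * beta) alpha))
  /\
  (k <= 2 * b ->
     (forall (M : finType) (sch : scheme n alpha beta Sym M),
        resilient k d b sch -> #|M| <= 1)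
     /\ exists sch : scheme n alpha beta Sym unit, resilient k d b sch).
Proof.
move=> Sym1 b1 kd dn; split.
  move=> bk M; case: n dn => [|n] dn sch Hres.
    by move: (leq_trans bk (leq_trans kd dn)).
  rewrite subn1 /= in dn.
  have := part1 kd dn bk Hres.
  have -> : \sum_((2 * b).+1 <= i < k.+1) minn ((d - i + 1) * beta) alpha
          = \sum_(2 * b <= i < k) minn ((d - i) * beta) alpha.
    rewrite -[(2 * b).+1]addn1 big_addn subn1 /=.
    apply: eq_big_nat => i /andP [_ ik].
    by rewrite !addn1 subnS prednK // subn_gt0 (leq_trans ik kd).
  by [].
move=> bk; split.
  move=> M sch Hres.
  have alleq : forall m1 m2 : M, m1 = m2.
    move=> m1 m2.
    apply: (collide Hres (hist := [::]) (K := [set j : 'I_n | j < k])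
     (P1 := [set j : 'I_n | j < b])
     (P2 := [set j : 'I_n | j < 2 * b] :\: [set j : 'I_n | j < b])).
    - by [].
    - rewrite card_lt; apply/minn_idPl; apply: leq_trans kd _; apply: leq_trans dn _; exact: leq_subr.
    - by rewrite card_lt geq_minl.
    - exact: cardP2.
    - exact: disjP.
    - by [].
    - by move=> [|p past] e fut.
    - move=> j; rewrite inE notP => jk j2b.
      by have := leq_trans (leq_ltn_trans j2b jk) bk; rewrite ltnn.
  have : injective (fun _ : M => tt) by move=> x y _; apply: alleq.
  by move/leq_card; rewrite card_unit.
have [x0 _] : exists x : Sym, x \in Sym by apply/card_gt0P; apply: ltnW.
exists (Scheme (fun _ _ => [tuple x0 | _ < alpha]) (fun _ _ _ _ => [tuple x0 | _ < beta])
               (fun _ _ _ => [tuple x0 | _ < alpha]) (fun _ _ _ => tt)).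
by move=> [] *.
Qed.
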